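(* Consider the FitzHugh–Nagumo system $\dot x_1=x_1-x_1^3/3-x_2+I$, $\dot x_2=cx_1-bx_2+a$ with real parameters satisfying $0<b<1$ and $b<c$. Let $\sigma\in\{1,-1\}$, $y_1^*=\sigma\sqrt{1-b}$, $y_2^*=(a+cy_1^* )/b$, and $I=y_2^*-y_1^*+(y_1^* )^3/3$. Then $(y_1^*,y_2^* )$ is a stationary point at which the Jacobian has trace zero and positive determinant $c-b^2$, hence a nonzero purely imaginary pair of eigenvalues. In translated coordinates $u=x_1-y_1^*$, $w=x_2-y_2^*$, the quadratic form $\psi=cu^2-2buw+w^2$ is positive definite and spans the kernel of the Lie derivative of the linearization on quadratic forms, and there is $\widehat\psi=\psi+O(|(u,w)|^3)$ with $$L_q(\widehat\psi)=-\frac{b^2-2b+c}{4(b^2-c)^2}\,\psi^2+O(|(u,w)|^5),$$ where $q$ is the (translated) vector field. In particular this coefficient is negative whenever $c\ge1$.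
   Context: For a vector field $g$, $L_g(\sigma)(x)=D\sigma(x)g(x)$. *)

(* Defs.v *)
From Stdlib Require Import Reals Lra.
Open Scope R_scope.

Definition fhn1 (I : R) (x1 x2 : R) : R := x1 - x1 ^ 3 / 3 - x2 + I.
Definition fhn2 (a b c : R) (x1 x2 : R) : R := c * x1 - b * x2 + a.

Definition jac11 (x1 : R) : R := 1 - x1 ^ 2.
Definition jac12 : R := -1.
Definition jac21 (c : R) : R := c.
Definition jac22 (b : R) : R := - b.

Definition ystar1 (sigma b : R) : R := sigma * sqrt (1 - b).
Definition ystar2 (sigma a b c : R) : R := (a + c * ystar1 sigma b) / b.
Definition Ipar (sigma a b c : R) : R :=
  ystar2 sigma a b c - ystar1 sigma b + (ystar1 sigma b) ^ 3 / 3.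

Definition q1 (sigma a b c : R) (u w : R) : R :=
  fhn1 (Ipar sigma a b c) (u + ystar1 sigma b) (w + ystar2 sigma a b c).
Definition q2 (sigma a b c : R) (u w : R) : R :=
  fhn2 a b c (u + ystar1 sigma b) (w + ystar2 sigma a b c).

Definition psi (b c : R) (u w : R) : R := c * u ^ 2 - 2 * b * u * w + w ^ 2.

Definition nrm (u w : R) : R := sqrt (u ^ 2 + w ^ 2).

Definition bigO_at0 (g : R -> R -> R) (k : nat) : Prop :=
  exists C delta, 0 < delta /\ forall u w, nrm u w < delta ->
    Rabs (g u w) <= C * (nrm u w) ^ k.

Definition diff2 (f D1 D2 : R -> R -> R) : Prop :=
  forall u w eps, 0 < eps -> exists delta, 0 < delta /\
    forall h k, nrm h k < delta ->
      Rabs (f (u + h) (w + k) - f u w - D1 u w * h - D2 u w * k) <= eps * nrm h k.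

Definition lie (D1 D2 g1 g2 : R -> R -> R) (u w : R) : R :=
  D1 u w * g1 u w + D2 u w * g2 u w.

(* Quadratic form with coefficients (p,r,s) and the Lie derivative of the
   linear field z |-> A z on it (computed from its gradient (2pu+rw, ru+2sw)). *)
Definition qform (p r s u w : R) : R := p * u ^ 2 + r * u * w + s * w ^ 2.
Definition lie_lin_qform (A11 A12 A21 A22 p r s u w : R) : R :=
  (2 * p * u + r * w) * (A11 * u + A12 * w) + (r * u + 2 * s * w) * (A21 * u + A22 * w).

(* Main.v *)
Require Import Defs.
From Stdlib Require Import Reals Lra List Arith Lia.
Open Scope R_scope.

Lemma nrm_ge_u u w : Rabs u <= nrm u w.
Proof.
  unfold nrm. rewrite <- sqrt_Rsqr_abs. apply sqrt_le_1_alt.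
  unfold Rsqr. nra.
Qed.
Lemma nrm_ge_w u w : Rabs w <= nrm u w.
Proof.
  unfold nrm. rewrite <- sqrt_Rsqr_abs. apply sqrt_le_1_alt.
  unfold Rsqr. nra.
Qed.
Lemma nrm_ge0 u w : 0 <= nrm u w.
Proof. unfold nrm; apply sqrt_pos. Qed.

Fixpoint peval (l : list (R*nat*nat)) (u w : R) : R :=
  match l with nil => 0 | (a,i,j)::t => a*u^i*w^j + peval t u w end.

Fixpoint psum (l : list (R*nat*nat)) : R :=
  match l with nil => 0 | (a,i,j)::t => Rabs a + psum t end.

Fixpoint mindeg (k : nat) (l : list (R*nat*nat)) : bool :=
  match l with nil => true | (a,i,j)::t => Nat.leb k (i+j) && mindeg k t end.

Lemma pow_small x m k : 0 <= x < 1 -> (k <= m)%nat -> x ^ m <= x ^ k.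
Proof.
  intros Hx Hkm. replace m with (k + (m-k))%nat by lia.
  rewrite pow_add. assert (0 <= x^k) by (apply pow_le; lra).
  assert (x ^ (m-k) <= 1).
  { rewrite <- (pow1 (m-k)). apply pow_incr. lra. }
  assert (0 <= x ^ (m-k)) by (apply pow_le; lra). nra.
Qed.

Lemma peval_bigO l k : mindeg k l = true -> bigO_at0 (peval l) k.
Proof.
  intros Hm. exists (psum l), 1. split; [lra|].
  intros u w Hn. pose proof (nrm_ge0 u w) as H0.
  induction l as [|[[a i] j] t IH]; simpl.
  - rewrite Rabs_R0. lra.
  - simpl in Hm. apply andb_prop in Hm. destruct Hm as [Hk Ht].
    apply Nat.leb_le in Hk. specialize (IH Ht).
    eapply Rle_trans; [apply Rabs_triang|].
    rewrite Rmult_plus_distr_r. apply Rplus_le_compat; [|exact IH].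
    rewrite !Rabs_mult, <- !RPow_abs.
    assert (Rabs u ^ i <= nrm u w ^ i) by (apply pow_incr; split; [apply Rabs_pos| apply nrm_ge_u]).
    assert (Rabs w ^ j <= nrm u w ^ j) by (apply pow_incr; split; [apply Rabs_pos| apply nrm_ge_w]).
    assert (nrm u w ^ (i+j) <= nrm u w ^ k) by (apply pow_small; lra || lia).
    rewrite pow_add in H2.
    assert (0 <= Rabs u ^ i) by (apply pow_le, Rabs_pos).
    assert (0 <= Rabs w ^ j) by (apply pow_le, Rabs_pos).
    assert (0 <= nrm u w ^ i) by (apply pow_le; lra).
    pose proof (Rabs_pos a).
    rewrite Rmult_assoc. apply Rmult_le_compat_l; [lra|].
    eapply Rle_trans; [|exact H2]. apply Rmult_le_compat; lra.
Qed.

Definition Q2 (f D1 D2 : R -> R -> R) : Prop :=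
  forall u w, exists M, 0 <= M /\ forall h k, nrm h k < 1 ->
    Rabs (f (u + h) (w + k) - f u w - D1 u w * h - D2 u w * k) <= M * nrm h k ^ 2.

Lemma Q2_diff2 f D1 D2 : Q2 f D1 D2 -> diff2 f D1 D2.
Proof.
  intros HQ u w eps He. destruct (HQ u w) as [M [HM HB]].
  exists (Rmin 1 (eps / (M+1))). split.
  { apply Rmin_glb_lt; [lra|]. apply Rdiv_lt_0_compat; lra. }
  intros h k Hn. pose proof (nrm_ge0 h k).
  assert (Hn1 : nrm h k < 1) by (eapply Rlt_le_trans; [exact Hn| apply Rmin_l]).
  assert (Hn2 : nrm h k < eps/(M+1)) by (eapply Rlt_le_trans; [exact Hn| apply Rmin_r]).
  eapply Rle_trans; [apply HB; exact Hn1|].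
  assert (nrm h k * (M+1) <= eps).
  { apply Rlt_le in Hn2. unfold Rdiv in Hn2.
    apply (Rmult_le_compat_r (M+1)) in Hn2; [|lra].
    rewrite Rmult_assoc, Rinv_l in Hn2; lra. }
  simpl. nra.
Qed.

Lemma Q2_ext f D1 D2 f' D1' D2' :
  (forall u w, f u w = f' u w) -> (forall u w, D1 u w = D1' u w) ->
  (forall u w, D2 u w = D2' u w) -> Q2 f D1 D2 -> Q2 f' D1' D2'.
Proof.
  intros E E1 E2 H u w. destruct (H u w) as [M [HM HB]]. exists M; split; auto.
  intros h k Hn. rewrite <- !E, <- E1, <- E2. auto.
Qed.

Lemma Q2_const a : Q2 (fun _ _ => a) (fun _ _ => 0) (fun _ _ => 0).
Proof. intros u w. exists 0; split; [lra|]. intros. replace (a - a - 0*h - 0*k) with 0 by ring.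
  rewrite Rabs_R0. lra. Qed.

Lemma Q2_u : Q2 (fun u _ => u) (fun _ _ => 1) (fun _ _ => 0).
Proof. intros u w. exists 0; split; [lra|]. intros. replace (u + h - u - 1*h - 0*k) with 0 by ring.
  rewrite Rabs_R0. lra. Qed.

Lemma Q2_w : Q2 (fun _ w => w) (fun _ _ => 0) (fun _ _ => 1).
Proof. intros u w. exists 0; split; [lra|]. intros. replace (w + k - w - 0*h - 1*k) with 0 by ring.
  rewrite Rabs_R0. lra. Qed.

Lemma Q2_plus f D1 D2 g E1 E2 : Q2 f D1 D2 -> Q2 g E1 E2 ->
  Q2 (fun u w => f u w + g u w) (fun u w => D1 u w + E1 u w) (fun u w => D2 u w + E2 u w).
Proof.
  intros Hf Hg u w. destruct (Hf u w) as [M [HM HB]]. destruct (Hg u w) as [N [HN HC]].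
  exists (M+N). split; [lra|]. intros h k Hn.
  replace (f (u + h) (w + k) + g (u + h) (w + k) - (f u w + g u w) - (D1 u w + E1 u w) * h -
    (D2 u w + E2 u w) * k) with
    ((f (u + h) (w + k) - f u w - D1 u w * h - D2 u w * k) +
     (g (u + h) (w + k) - g u w - E1 u w * h - E2 u w * k)) by ring.
  eapply Rle_trans; [apply Rabs_triang|]. specialize (HB h k Hn). specialize (HC h k Hn). lra.
Qed.

Lemma lin_bound a b h k : Rabs (a*h + b*k) <= (Rabs a + Rabs b) * nrm h k.
Proof.
  eapply Rle_trans; [apply Rabs_triang|]. rewrite !Rabs_mult.
  pose proof (nrm_ge_u h k). pose proof (nrm_ge_w h k).
  pose proof (Rabs_pos a). pose proof (Rabs_pos b). nra.
Qed.

Lemma Q2_mult f D1 D2 g E1 E2 : Q2 f D1 D2 -> Q2 g E1 E2 ->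
  Q2 (fun u w => f u w * g u w) (fun u w => f u w * E1 u w + g u w * D1 u w)
     (fun u w => f u w * E2 u w + g u w * D2 u w).
Proof.
  intros Hf Hg u w. destruct (Hf u w) as [M [HM HB]]. destruct (Hg u w) as [N [HN HC]].
  set (Lf := Rabs (D1 u w) + Rabs (D2 u w)). set (Lg := Rabs (E1 u w) + Rabs (E2 u w)).
  exists (Rabs (f u w) * N + Rabs (g u w) * M + (Lf + M) * (Lg + N)).
  assert (0 <= Lf) by (unfold Lf; pose proof (Rabs_pos (D1 u w)); pose proof (Rabs_pos (D2 u w)); lra).
  assert (0 <= Lg) by (unfold Lg; pose proof (Rabs_pos (E1 u w)); pose proof (Rabs_pos (E2 u w)); lra).
  pose proof (Rabs_pos (f u w)). pose proof (Rabs_pos (g u w)).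
  split; [nra|]. intros h k Hn.
  specialize (HB h k Hn). specialize (HC h k Hn).
  set (rf := f (u + h) (w + k) - f u w - D1 u w * h - D2 u w * k) in *.
  set (rg := g (u + h) (w + k) - g u w - E1 u w * h - E2 u w * k) in *.
  set (df := D1 u w * h + D2 u w * k). set (dg := E1 u w * h + E2 u w * k).
  assert (Hdf : Rabs df <= Lf * nrm h k) by apply lin_bound.
  assert (Hdg : Rabs dg <= Lg * nrm h k) by apply lin_bound.
  pose proof (nrm_ge0 h k) as Hn0.
  replace (f (u + h) (w + k) * g (u + h) (w + k) - f u w * g u w -
    (f u w * E1 u w + g u w * D1 u w) * h - (f u w * E2 u w + g u w * D2 u w) * k)
    with (f u w * rg + g u w * rf + (df + rf) * (dg + rg))
    by (unfold rf, rg, df, dg; ring).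
  assert (Hsq : nrm h k ^ 2 <= nrm h k) by (simpl; nra).
  assert (HM2 : M * nrm h k ^ 2 <= M * nrm h k) by (apply Rmult_le_compat_l; lra).
  assert (HN2 : N * nrm h k ^ 2 <= N * nrm h k) by (apply Rmult_le_compat_l; lra).
  assert (A1: Rabs (df + rf) <= (Lf + M) * nrm h k).
  { eapply Rle_trans; [apply Rabs_triang|]. lra. }
  assert (A2: Rabs (dg + rg) <= (Lg + N) * nrm h k).
  { eapply Rle_trans; [apply Rabs_triang|]. lra. }
  eapply Rle_trans; [apply Rabs_triang|].
  eapply Rle_trans; [apply Rplus_le_compat_r; apply Rabs_triang|].
  rewrite !Rabs_mult.
  assert (Rabs (df + rf) * Rabs (dg + rg) <= (Lf + M) * nrm h k * ((Lg + N) * nrm h k)).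
  { apply Rmult_le_compat; try apply Rabs_pos; assumption. }
  simpl in *. nra.
Qed.

Lemma bigO_ext f g k : (forall u w, f u w = g u w) -> bigO_at0 g k -> bigO_at0 f k.
Proof. intros E [C [d [Hd H]]]. exists C, d. split; auto. intros u w Hn. rewrite E. auto. Qed.

Lemma Q2_powu i : Q2 (fun u _ => u ^ i) (fun u _ => INR i * u ^ pred i) (fun _ _ => 0).
Proof.
  induction i.
  - eapply Q2_ext; [| | |apply (Q2_const 1)]; intros; simpl; ring.
  - eapply Q2_ext; [| | |apply (Q2_mult _ _ _ _ _ _ Q2_u IHi)]; intros; simpl; try ring.
    destruct i; simpl; ring.
Qed.

Lemma Q2_poww j : Q2 (fun _ w => w ^ j) (fun _ _ => 0) (fun _ w => INR j * w ^ pred j).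
Proof.
  induction j.
  - eapply Q2_ext; [| | |apply (Q2_const 1)]; intros; simpl; ring.
  - eapply Q2_ext; [| | |apply (Q2_mult _ _ _ _ _ _ Q2_w IHj)]; intros; simpl; try ring.
    destruct j; simpl; ring.
Qed.

Definition pd1 (l : list (R*nat*nat)) :=
  map (fun m => match m with (a,i,j) => (a * INR i, pred i, j) end) l.
Definition pd2 (l : list (R*nat*nat)) :=
  map (fun m => match m with (a,i,j) => (a * INR j, i, pred j) end) l.

Lemma Q2_peval l : Q2 (peval l) (peval (pd1 l)) (peval (pd2 l)).
Proof.
  induction l as [|[[a i] j] t IH]; simpl.
  - eapply Q2_ext; [| | |apply (Q2_const 0)]; intros; simpl; ring.
  - eapply Q2_ext; [| | |apply (Q2_plus _ _ _ _ _ _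
       (Q2_mult _ _ _ _ _ _ (Q2_mult _ _ _ _ _ _ (Q2_const a) (Q2_powu i)) (Q2_poww j)) IH)].
    all: intros; simpl; ring.
Qed.

Section C.
Variables b c y : R.
Definition DD := c - b^2.
Definition h0 := -4*b*c*y/(3*DD).
Definition h1 := 2*(b^2+c)*y/DD.
Definition h2 := -4*b*y/DD.
Definition h3 := 4*y/(3*DD).
Definition kap := (2*b*y^2 - DD)/(4*DD^2).
Definition G1 := -4*(b^2+c)*y^2/DD + 2*b/3.
Definition G2 := 4*b*y^2/DD.
Definition k3 := -kap.
Definition k2 := 3*b*kap.
Definition k1 := (G2 - (4*b^2+5*c)*kap)/3.
Definition k0 := (2*b*k1 + 10*b*c*kap + G1)/4.
Definition Lhat : list (R*nat*nat) :=
  (c,2%nat,0%nat)::(-2*b,1%nat,1%nat)::(1,0%nat,2%nat)::(h0,3%nat,0%nat)::(h1,2%nat,1%nat)::(h2,1%nat,2%nat)::(h3,0%nat,3%nat)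
  ::(k0,4%nat,0%nat)::(k1,3%nat,1%nat)::(k2,2%nat,2%nat)::(k3,1%nat,3%nat)::nil.
Definition Lh : list (R*nat*nat) :=
  (h0,3%nat,0%nat)::(h1,2%nat,1%nat)::(h2,1%nat,2%nat)::(h3,0%nat,3%nat)
  ::(k0,4%nat,0%nat)::(k1,3%nat,1%nat)::(k2,2%nat,2%nat)::(k3,1%nat,3%nat)::nil.
Definition Lrem : list (R*nat*nat) :=
  (-h0 - 4*k0*y,5%nat,0%nat)::(-(2/3)*h1 - 3*k1*y,4%nat,1%nat)::(-h2/3 - 2*k2*y,3%nat,2%nat)::(-k3*y,2%nat,3%nat)
  ::(-4*k0/3,6%nat,0%nat)::(-k1,5%nat,1%nat)::(-2*k2/3,4%nat,2%nat)::(-k3/3,3%nat,3%nat)::nil.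
End C.

Lemma key b c y u w : c - b^2 <> 0 ->
  lie (peval (pd1 (Lhat b c y))) (peval (pd2 (Lhat b c y)))
      (fun u w => b*u - w - y*u^2 - u^3/3) (fun u w => c*u - b*w) u w
  - kap b c y * (psi b c u w)^2 = peval (Lrem b c y) u w.
Proof.
  intros HD. unfold lie, pd1, pd2, Lhat, Lrem, psi; simpl.
  unfold k0, k1, k2, k3, G1, G2, kap, h0, h1, h2, h3, DD.
  field. auto.
Qed.

Lemma ystar_sq sigma b : b < 1 -> (sigma = 1 \/ sigma = -1) -> (ystar1 sigma b)^2 = 1 - b.
Proof.
  intros Hb Hs. unfold ystar1. rewrite Rpow_mult_distr.
  replace (sqrt (1-b) ^ 2) with (1-b) by (simpl; rewrite Rmult_1_r, sqrt_sqrt; lra).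
  destruct Hs; subst; simpl; ring.
Qed.

Theorem mainTheorem10 (a b c sigma : R)
  (hb0 : 0 < b) (hb1 : b < 1) (hbc : b < c) (hsigma : sigma = 1 \/ sigma = -1) :
  let y1 := ystar1 sigma b in
  let y2 := ystar2 sigma a b c in
  let I := Ipar sigma a b c in
  let A11 := jac11 y1 in let A12 := jac12 in
  let A21 := jac21 c in let A22 := jac22 b in
  let tr := A11 + A22 in
  let det := A11 * A22 - A12 * A21 in
  let coef := - (b ^ 2 - 2 * b + c) / (4 * (b ^ 2 - c) ^ 2) in
  (fhn1 I y1 y2 = 0 /\ fhn2 a b c y1 y2 = 0) /\
  tr = 0 /\ det = c - b ^ 2 /\ 0 < det /\
  (exists omega, 0 < omega /\ forall x y,
     (x ^ 2 - y ^ 2 - tr * x + det = 0 /\ 2 * x * y - tr * y = 0) <->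
     (x = 0 /\ (y = omega \/ y = - omega))) /\
  (forall u w, (u, w) <> (0, 0) -> 0 < psi b c u w) /\
  (forall u w, psi b c u w = qform c (- 2 * b) 1 u w) /\
  (forall p r s, (forall u w, lie_lin_qform A11 A12 A21 A22 p r s u w = 0) <->
     exists t, p = t * c /\ r = t * (- 2 * b) /\ s = t) /\
  (exists psihat D1 D2 : R -> R -> R,
     diff2 psihat D1 D2 /\
     bigO_at0 (fun u w => psihat u w - psi b c u w) 3 /\
     bigO_at0 (fun u w => lie D1 D2 (q1 sigma a b c) (q2 sigma a b c) u w
                          - coef * (psi b c u w) ^ 2) 5) /\
  (1 <= c -> coef < 0).
Proof.
  pose proof (ystar_sq sigma b hb1 hsigma) as Hy.
  cbv zeta.
  assert (HA : jac11 (ystar1 sigma b) = b) by (unfold jac11; lra).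
  rewrite HA. unfold jac12, jac21, jac22.
  assert (HD : 0 < c - b^2) by nra.
  assert (Hq1 : forall u w, q1 sigma a b c u w =
     b*u - w - ystar1 sigma b * u^2 - u^3/3).
  { intros u w. assert (E : q1 sigma a b c u w - (b*u - w - ystar1 sigma b * u^2 - u^3/3)
        = u * ((1 - b) - ystar1 sigma b ^ 2)).
    { unfold q1, fhn1, Ipar. field. }
    rewrite Hy in E. lra. }
  assert (Hq2 : forall u w, q2 sigma a b c u w = c*u - b*w).
  { intros u w. unfold q2, fhn2, ystar2. field. lra. }
  split; [split|].
  { unfold fhn1, Ipar. field. }
  { unfold fhn2, ystar2. field. lra. }
  split; [ring|]. split; [ring|]. split; [nra|].
  split.
  { exists (sqrt (c - b^2)). split; [apply sqrt_lt_R0; lra|].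
    pose proof (sqrt_sqrt (c - b^2) ltac:(lra)) as Hs.
    intros x z. split.
    - intros [E1 E2].
      assert (Hx : x = 0).
      { assert (x * z = 0) by lra. destruct (Rmult_integral _ _ H) as [|Hz]; auto.
        subst z. nra. }
      subst x. split; auto.
      assert ((z - sqrt (c-b^2)) * (z + sqrt (c-b^2)) = 0) by nra.
      destruct (Rmult_integral _ _ H) as [|]; [left|right]; lra.
    - intros [Hx [Hz|Hz]]; subst; split; nra. }
  split.
  { intros u w Hne. unfold psi.
    destruct (Req_dec u 0) as [Hu|Hu].
    - subst u. assert (w <> 0) by (intro; subst; apply Hne; reflexivity). nra.
    - assert (0 < u^2) by (pose proof (Rsqr_pos_lt u Hu); unfold Rsqr in *; simpl; lra).
      assert (0 < (c - b^2) * u^2) by (apply Rmult_lt_0_compat; lra).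
      assert (0 <= (w - b*u)^2) by (apply pow2_ge_0). nra. }
  split.
  { intros; unfold psi, qform; ring. }
  split.
  { intros p r s. split.
    - intros H. exists s.
      pose proof (H 1 0) as E1. pose proof (H 0 1) as E2.
      unfold lie_lin_qform in E1, E2.
      assert (Er : r = s * (-2*b)) by lra.
      split; [|split; auto].
      subst r. apply (Rmult_eq_reg_r b); [|lra]. lra.
    - intros [t [Hp [Hr Hs]]] u w. subst. unfold lie_lin_qform. ring. }
  split.
  { set (y := ystar1 sigma b) in *.
    exists (peval (Lhat b c y)), (peval (pd1 (Lhat b c y))), (peval (pd2 (Lhat b c y))).
    split; [apply Q2_diff2, Q2_peval|].
    split.
    { apply bigO_ext with (peval (Lh b c y)); [|apply peval_bigO; reflexivity].
      intros u w. unfold Lhat, Lh, psi; simpl. ring. }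
    apply bigO_ext with (peval (Lrem b c y)); [|apply peval_bigO; reflexivity].
    intros u w. rewrite <- key by lra.
    assert (Hk : kap b c y = - (b ^ 2 - 2 * b + c) / (4 * (b ^ 2 - c) ^ 2)).
    { unfold kap, DD. rewrite Hy. field. lra. }
    rewrite Hk. unfold lie. rewrite Hq1, Hq2. reflexivity. }
  intros Hc.
  assert (0 < 4 * (b^2 - c)^2) by nra.
  assert (0 < b^2 - 2*b + c) by nra.
  assert (0 < (b^2 - 2*b + c) / (4 * (b^2 - c)^2)) by (apply Rdiv_lt_0_compat; lra).
  unfold Rdiv in *. rewrite Ropp_mult_distr_l_reverse. lra.
Qed.
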